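(* The $(1+1)$-elitist unary unbiased black-box complexity of the $\mathrm{DLB}$ problem is $\Omega(n^3)$; that is, there is a constant $c>0$ such that for all (sufficiently large) even $n$, every $(1+1)$-elitist unary unbiased black-box algorithm has expected runtime at least $c n^3$ on $\mathrm{DLB}:\{0,1\}^n\to\mathbb{R}$.
   Context: Let $n$ be an even positive integer. For $x\in\{0,1\}^n$ consider the blocks $(x_{2\ell+1},x_{2\ell+2})$, $\ell=0,\dots,\frac n2-1$. If $x\neq(1,\dots,1)$, let $m$ be the smallest $\ell$ with $x_{2\ell+1}\neq 1$ or $x_{2\ell+2}\neq 1$, and define $\mathrm{DLB}(x)=2m+1$ if $x_{2m+1}+x_{2m+2}=0$ and $\mathrm{DLB}(x)=2m$ if $x_{2m+1}+x_{2m+2}=1$; set $\mathrm{DLB}(1,\dots,1)=n$. The $\mathrm{DLB}$ problem is to maximize $\mathrm{DLB}$. A unary unbiased variation operator $V$ assigns to each $x\in\{0,1\}^n$ a probability distribution $V(x)$ on $\{0,1\}^n$ such that for all $x,y,z\in\{0,1\}^n$, $\Pr[y=V(x)]=\Pr[y\oplus z=V(x\oplus z)]$, and for all permutations $\sigma$ of $[1..n]$, $\Pr[y=V(x)]=\Pr[\sigma(y)=V(\sigma(x))]$, where $\sigma(x)=(x_{\sigma(1)},\dots,x_{\sigma(n)})$. A $(1+1)$-elitist unary unbiased black-box algorithm starts with a search point $x$ chosen uniformly at random from $\{0,1\}^n$; in each iteration it chooses a unary unbiased variation operator $V$ (this choice may depend only on the fitness values of the search points generated so far), samples $q\sim V(x)$,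 evaluates it, and replaces $x$ by a best individual among $\{x,q\}$ (ties broken arbitrarily). Every generated search point is evaluated immediately. The runtime is the number of fitness evaluations until (and including) the first evaluation of an optimal solution. The $(1+1)$-elitist black-box complexity of $\mathrm{DLB}$ is the infimum, over all such algorithms, of the expected runtime on $\mathrm{DLB}$. *)

(* Defs.v *)
From HB Require Import structures.
From mathcomp Require Import all_boot all_order all_algebra all_fingroup.
From mathcomp Require Import all_classical all_reals.
From mathcomp Require Import ereal topology normedtype sequences.
Set Implicit Arguments. Unset Strict Implicit. Unset Printing Implicit Defensive.
Import Order.TTheory GRing.Theory Num.Theory.
Local Open Scope ring_scope.

(* Search space {0,1}^n; position i : 'I_n is the (i+1)-th bit of the paper. *)
Definition B (n : nat) := {ffun 'I_n -> bool}.

Definition bit (n : nat) (x : B n) (i : nat) : bool :=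
  if insub i is Some j then x j else false.

(* dlb_aux n x l k: inspect blocks l, l+1, ..., l+k-1 (block l = bits 2l, 2l+1,
   i.e. (x_{2l+1}, x_{2l+2}) in the paper's 1-indexing). *)
Fixpoint dlb_aux (n : nat) (x : B n) (l k : nat) : nat :=
  match k with
  | 0 => n
  | k'.+1 =>
      if bit x l.*2 && bit x l.*2.+1 then dlb_aux x l.+1 k'
      else if ~~ bit x l.*2 && ~~ bit x l.*2.+1 then l.*2.+1
      else l.*2
  end.

(* DLB(x): m = first block that is not (1,1); 2m+1 if it is (0,0), 2m if it has
   exactly one 1; n for the all-ones string. *)
Definition DLB (n : nat) (x : B n) : nat := dlb_aux x 0 n./2.

Definition optimal (n : nat) (x : B n) : bool := [forall y : B n, DLB y <= DLB x]%N.

Definition bxor (n : nat) (x z : B n) : B n := [ffun i => x i (+) z i].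
Definition bperm (n : nat) (s : {perm 'I_n}) (x : B n) : B n := [ffun i => x (s i)].

(* V x y = Pr[y = V(x)] *)
Definition unary_unbiased (R : realType) (n : nat) (V : B n -> B n -> R) : Prop :=
  [/\ (forall x y, 0 <= V x y),
      (forall x, \sum_(y : B n) V x y = 1),
      (forall x y z, V x y = V (bxor x z) (bxor y z)) &
      (forall x y (s : {perm 'I_n}), V x y = V (bperm s x) (bperm s y))].

(* A (1+1)-elitist unary unbiased black-box algorithm: the operator used in each
   iteration is a function of the sequence of fitness values seen so far, and
   ties are broken by a rule (true = replace x by q) that is a function of the
   fitness history including the offspring's fitness. *)
Record ealg (R : realType) (n : nat) := EAlg {
  op : seq nat -> B n -> B n -> R;
  op_unbiased : forall h, unary_unbiased (op h);
  tie : seq nat -> bool }.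

Definition select (R : realType) (n : nat) (A : ealg R n) (h' : seq nat) (x q : B n) : B n :=
  if (DLB x < DLB q)%N then q
  else if (DLB q < DLB x)%N then x
  else if tie A h' then q else x.

(* probability that the iterations starting from current point x with fitness
   history h generate exactly the offspring sequence qs *)
Fixpoint steps (R : realType) (n : nat) (A : ealg R n) (h : seq nat) (x : B n)
    (qs : seq (B n)) : R :=
  match qs with
  | [::] => 1
  | q :: qs' =>
      let h' := rcons h (DLB q) in
      op A h x q * steps A h' (select A h' x q) qs'
  end.

(* probability that the first size qs evaluated points are exactly qs
   (initial point uniform) *)
Definition traj_prob (R : realType) (n : nat) (A : ealg R n) (qs : seq (B n)) : R :=
  match qs with
  | [::] => 1
  | q0 :: qs' => (#|{: B n}|%:R)^-1 * steps A [:: DLB q0] q0 qs'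
  end.

(* Pr[T > k]: none of the first k evaluated points is optimal *)
Definition surv (R : realType) (n : nat) (A : ealg R n) (k : nat) : R :=
  \sum_(qs : k.-tuple (B n)) (if all (fun q => ~~ optimal q) qs then traj_prob A qs else 0).

(* E[T] = sum_{k >= 0} Pr[T > k]  (possibly +oo) *)
Definition expected_runtime (R : realType) (n : nat) (A : ealg R n) : \bar R :=
  (\sum_(0 <= k <oo) (surv A k)%:E)%E.

Definition dlb_complexity (R : realType) (n : nat) : \bar R :=
  ereal_inf (range (@expected_runtime R n)).

(* Main.v *)
Require Import Defs.
From HB Require Import structures.
From mathcomp Require Import all_boot all_order all_algebra all_fingroup.
From mathcomp Require Import all_classical all_reals.
From mathcomp Require Import ereal topology normedtype sequences.
From mathcomp Require Import zify ring lra.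
Import Order.TTheory GRing.Theory Num.Theory.
Set Implicit Arguments. Unset Strict Implicit. Unset Printing Implicit Defensive.
Local Open Scope ring_scope.

Section Bits.
Variable n : nat.
Local Notation B := (B n).

Definition b0 : B := [ffun=> false].
Definition msk (p : nat) (z : B) : B := [ffun i : 'I_n => (p <= i)%N && z i].

Lemma bitO (x : B) (i : 'I_n) : bit x i = x i.
Proof. by rewrite /bit valK. Qed.

Lemma bit_out (x : B) i : (n <= i)%N -> bit x i = false.
Proof. by move=> Hi; rewrite /bit insubF // ltnNge Hi. Qed.

Lemma bit_xor (x z : B) i : bit (bxor x z) i = bit x i (+) bit z i.
Proof.
case: (ltnP i n) => Hi; last by rewrite !bit_out.
by rewrite -[i]/(val (Ordinal Hi)) !bitO /bxor ffunE.
Qed.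

Lemma bit_msk p (z : B) i : bit (msk p z) i = (p <= i)%N && bit z i.
Proof.
case: (ltnP i n) => Hi; last by rewrite !bit_out ?andbF.
by rewrite -[i]/(val (Ordinal Hi)) !bitO /msk ffunE.
Qed.

Lemma bit_b0 i : bit b0 i = false.
Proof.
case: (ltnP i n) => Hi; last by rewrite !bit_out.
by rewrite -[i]/(val (Ordinal Hi)) !bitO /b0 ffunE.
Qed.

Lemma bitP (x y : B) : (forall i, (i < n)%N -> bit x i = bit y i) -> x = y.
Proof.
move=> H; apply/ffunP => j; rewrite -!bitO; exact: H.
Qed.

Lemma bxorK (x z : B) : bxor (bxor x z) z = x.
Proof. by apply: bitP => i _; rewrite !bit_xor addbK. Qed.

Lemma bxorC (x z : B) : bxor x z = bxor z x.
Proof. by apply: bitP => i _; rewrite !bit_xor addbC. Qed.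

Lemma bxorA (x y z : B) : bxor x (bxor y z) = bxor (bxor x y) z.
Proof. by apply: bitP => i _; rewrite !bit_xor addbA. Qed.

Lemma bxorxx (x : B) : bxor x x = b0.
Proof. by apply: bitP => i _; rewrite !bit_xor bit_b0 addbb. Qed.

Lemma bxor0 (x : B) : bxor x b0 = x.
Proof. by apply: bitP => i _; rewrite !bit_xor bit_b0 addbF. Qed.

Lemma msk_out p (z : B) : (n <= p)%N -> msk p z = b0.
Proof.
move=> Hp; apply: bitP => i Hi; rewrite bit_msk bit_b0.
by have -> : (p <= i)%N = false by apply/negbTE; rewrite -ltnNge; lia.
Qed.

Lemma msk0 (z : B) : msk 0 z = z.
Proof. by apply: bitP => i _; rewrite bit_msk. Qed.

End Bits.

Section DLBfacts.
Variable L : nat.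
Local Notation n := L.*2.
Local Notation B := (B n).

Definition blk11 (x : B) l := bit x l.*2 && bit x l.*2.+1.
Definition blk00 (x : B) l := ~~ bit x l.*2 && ~~ bit x l.*2.+1.

Lemma dlb_aux_find (x : B) l k : dlb_aux x l k =
  let j := find (fun i => ~~ blk11 x i) (iota l k) in
  if (j < k)%N then (if blk00 x (l + j) then (l + j).*2.+1 else (l + j).*2) else n.
Proof.
elim: k l => [|k IH] l //=.
rewrite /blk11 /blk00; case: ifP => H11 /=.
- rewrite IH /= ltnS addSnnS; done.
- by rewrite addn0.
Qed.

Definition cb (x : B) := find (fun i => ~~ blk11 x i) (iota 0 L).

Lemma DLBE (x : B) : DLB x =
  if (cb x < L)%N then (if blk00 x (cb x) then (cb x).*2.+1 else (cb x).*2) else n.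
Proof. by rewrite /DLB doubleK dlb_aux_find. Qed.

Lemma cb_le (x : B) : (cb x <= L)%N.
Proof. by rewrite /cb -[X in (_ <= X)%N](size_iota 0 L) find_size. Qed.

Lemma cb_before (x : B) l : (l < cb x)%N -> blk11 x l.
Proof.
move=> Hl; have := before_find 0 Hl.
have HL : (l < L)%N by have := cb_le x; lia.
by rewrite nth_iota // add0n => /negbFE.
Qed.

Lemma cb_at (x : B) : (cb x < L)%N -> ~~ blk11 x (cb x).
Proof.
move=> H; have Hh : has (fun i => ~~ blk11 x i) (iota 0 L) by rewrite has_find size_iota.
by have := nth_find 0 Hh; rewrite -/(cb x) nth_iota // add0n.
Qed.

Lemma cb_uniq (x : B) m : (m <= L)%N -> (forall l, (l < m)%N -> blk11 x l) ->
  ((m < L)%N -> ~~ blk11 x m) -> cb x = m.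
Proof.
move=> HmL Hb Hm; case: (ltngtP (cb x) m) => // H.
- by have := cb_at (leq_trans H HmL); rewrite Hb.
- by have := cb_before H; move: (Hm (leq_trans H (cb_le x))) => /negbTE ->.
Qed.

Lemma cb_congr (x y : B) : (forall i, (i < (cb x).*2.+2)%N -> bit x i = bit y i) ->
  cb y = cb x /\ DLB y = DLB x.
Proof.
move=> H.
have E : forall l, (l <= cb x)%N -> blk11 y l = blk11 x l /\ blk00 y l = blk00 x l.
  move=> l Hl; rewrite /blk11 /blk00 !H //; lia.
have Hc : cb y = cb x.
  apply: cb_uniq; first exact: cb_le.
  - by move=> l Hl; rewrite (E l (ltnW Hl)).1; exact: cb_before.
  - by move=> Hl; rewrite (E _ (leqnn _)).1; exact: cb_at.
split=> //; rewrite !DLBE Hc; case: ifP => // HL.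
by rewrite (E _ (leqnn _)).2.
Qed.

Lemma DLB_ge (x : B) : ((cb x).*2 <= DLB x)%N.
Proof. rewrite DLBE; case: ifP => [_|]; first by case: ifP. by have := cb_le x; lia. Qed.

Lemma DLB_lt (x : B) : (cb x < L)%N -> (DLB x < (cb x).*2.+2)%N.
Proof. move=> H; rewrite DLBE H; case: ifP => _; lia. Qed.

Lemma DLB_le (x : B) : (DLB x <= n)%N.
Proof. rewrite DLBE; case: ifP => [H|_ //]; case: ifP => _; lia. Qed.

Lemma DLB_n (x : B) : (DLB x == n) = (cb x == L).
Proof.
rewrite DLBE; case: ifP => H.
  have -> : (cb x == L) = false by apply/negbTE; lia.
  by case: ifP => _; apply/negbTE; lia.
have := cb_le x; rewrite eqxx => H2; symmetry; apply/eqP; lia.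
Qed.

Definition ones : B := [ffun=> true].

Lemma DLB_ones : DLB ones = n.
Proof.
apply/eqP; rewrite DLB_n; apply/eqP; apply: cb_uniq => [//| l Hl |]; last by rewrite ltnn.
have H1 : (l.*2 < n)%N by lia.
have H2 : (l.*2.+1 < n)%N by lia.
by rewrite /blk11 -[l.*2]/(val (Ordinal H1)) -[l.*2.+1]/(val (Ordinal H2)) !bitO !ffunE.
Qed.

Lemma optimalE (x : B) : optimal x = (DLB x == n).
Proof.
apply/forallP/eqP => [H|H y]; last by rewrite H DLB_le.
by apply/eqP; rewrite eqn_leq DLB_le -{1}DLB_ones H.
Qed.

End DLBfacts.

Section Run.
Variable R : realType.
Variable L : nat.
Local Notation n := L.*2.
Local Notation B := (B n).
Variable A : ealg R n.

Lemma sel_DLB h (x q : B) : DLB (select A h x q) = maxn (DLB x) (DLB q).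
Proof.
rewrite /select /maxn; case: ltngtP => H //; case: ifP => _; by rewrite H.
Qed.

Lemma sel_in h (x q : B) : select A h x q = x \/ select A h x q = q.
Proof. by rewrite /select; case: ifP => _; [right|case: ifP => _; [left|case: ifP]; auto]. Qed.

Lemma sel_xor h (x q r : B) : DLB (bxor x r) = DLB x -> DLB (bxor q r) = DLB q ->
  select A h (bxor x r) (bxor q r) = bxor (select A h x q) r.
Proof. by move=> Hx Hq; rewrite /select Hx Hq; case: ifP => _ //; case: ifP => _ //; case: ifP. Qed.

Lemma op_xor h (x q r : B) : op A h (bxor x r) (bxor q r) = op A h x q.
Proof. by case: (op_unbiased A h) => _ _ H _; rewrite -H. Qed.

Fixpoint run (h : seq nat) (x : B) (qs : seq B) : seq nat * B :=
  if qs is q :: qs' then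
    run (rcons h (DLB q)) (select A (rcons h (DLB q)) x q) qs'
  else (h, x).

Lemma steps_rcons h x qs q : steps A h x (rcons qs q) =
  steps A h x qs * op A (run h x qs).1 (run h x qs).2 q.
Proof.
elim: qs h x => [|q' qs IH] h x /=; first by rewrite mulr1 mul1r.
by rewrite IH mulrA.
Qed.

Lemma run_rcons h x qs q : run h x (rcons qs q) =
  (rcons (run h x qs).1 (DLB q), select A (rcons (run h x qs).1 (DLB q)) (run h x qs).2 q).
Proof. by elim: qs h x => [|q' qs IH] h x //=. Qed.

Lemma run_max h x qs : forall y, y \in x :: qs -> (DLB y <= DLB (run h x qs).2)%N.
Proof.
elim: qs h x => [|q qs IH] h x y /=; first by rewrite inE => /eqP ->.
set s := select A _ x q.
have Hs := IH (rcons h (DLB q)) s s (mem_head _ _).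
rewrite !inE => /orP [/eqP ->|/orP [/eqP ->|Hy]].
- by apply: leq_trans Hs; rewrite /s sel_DLB leq_maxl.
- by apply: leq_trans Hs; rewrite /s sel_DLB leq_maxr.
- by apply: IH; rewrite inE Hy orbT.
Qed.

Lemma run_mem h x qs : (run h x qs).2 \in x :: qs.
Proof.
elim: qs h x => [|q qs IH] h x /=; first by rewrite inE.
have := IH (rcons h (DLB q)) (select A (rcons h (DLB q)) x q).
rewrite !inE; case: (sel_in (rcons h (DLB q)) x q) => ->; case/orP => ->; rewrite ?orbT //.
Qed.

Lemma run_xor h x qs r : (forall y, y \in x :: qs -> DLB (bxor y r) = DLB y) ->
  run h (bxor x r) (map (fun y : B => bxor y r) qs) = ((run h x qs).1, bxor (run h x qs).2 r).
Proof.
elim: qs h x => [|q qs IH] h x H //=.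
rewrite H ?inE ?eqxx ?orbT // sel_xor ?H ?inE ?eqxx ?orbT //; apply: IH => y.
rewrite inE => /orP [/eqP ->|Hy]; last by apply: H; rewrite !inE Hy !orbT.
by case: (sel_in (rcons h (DLB q)) x q) => ->; apply: H; rewrite !inE eqxx ?orbT.
Qed.

Lemma steps_xor h x qs r : (forall y, y \in x :: qs -> DLB (bxor y r) = DLB y) ->
  steps A h (bxor x r) (map (fun y : B => bxor y r) qs) = steps A h x qs.
Proof.
elim: qs h x => [|q qs IH] h x H //=.
rewrite op_xor H ?inE ?eqxx ?orbT // sel_xor ?H ?inE ?eqxx ?orbT //; congr (_ * _); apply: IH => y.
rewrite inE => /orP [/eqP ->|Hy]; last by apply: H; rewrite !inE Hy !orbT.
by case: (sel_in (rcons h (DLB q)) x q) => ->; apply: H; rewrite !inE eqxx ?orbT.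
Qed.

Lemma op_ge0 h (x q : B) : 0 <= op A h x q.
Proof. by case: (op_unbiased A h). Qed.

Lemma op_sum1 h (x : B) : \sum_q op A h x q = 1.
Proof. by case: (op_unbiased A h). Qed.

Lemma steps_ge0 h x qs : 0 <= steps A h x qs.
Proof. elim: qs h x => [|q qs IH] h x /=; by rewrite ?mulr_ge0 ?op_ge0. Qed.

Definition st (t : seq B) : seq nat * B :=
  if t is q0 :: qs then run [:: DLB q0] q0 qs else ([::], b0 n).

Lemma traj_ge0 t : 0 <= traj_prob A t.
Proof. case: t => [|q qs] //=; rewrite mulr_ge0 ?steps_ge0 // invr_ge0 ler0n //. Qed.

Lemma traj_rcons t q : t != [::] ->
  traj_prob A (rcons t q) = traj_prob A t * op A (st t).1 (st t).2 q.
Proof. by case: t => [|q0 qs] //= _; rewrite steps_rcons mulrA. Qed.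

Lemma st_rcons t q : t != [::] -> st (rcons t q) =
  (rcons (st t).1 (DLB q), select A (rcons (st t).1 (DLB q)) (st t).2 q).
Proof. by case: t => [|q0 qs] //= _; rewrite run_rcons. Qed.

End Run.

Section Potential.
Variable R : realType.
Variable L : nat.
Local Notation n := L.*2.
Local Notation B := (B n).

Definition M0 := L./2.

Definition phi (D : nat) : R :=
  if D == n then 0 else
  if (D./2 < M0)%N then - (L - M0)%:R
  else if odd D then - (L - (D./2).+1)%:R - 4 else - (L - (D./2).+1)%:R.

Definition Fv (m : nat) : R := - (L - maxn m M0)%:R.

Definition g (x : B) := phi (DLB x).

Lemma M0_le : (M0 <= L)%N.
Proof. rewrite /M0; lia. Qed.

Lemma phi2 m : (m < L)%N -> phi m.*2 = if (m < M0)%N then - (L - M0)%:R else - (L - m.+1)%:R.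
Proof.
move=> H; rewrite /phi; have -> : (m.*2 == n) = false by apply/negbTE; lia.
by rewrite doubleK odd_double.
Qed.

Lemma phi21 m : (m < L)%N -> phi m.*2.+1 = if (m < M0)%N then - (L - M0)%:R else - (L - m.+1)%:R - 4.
Proof.
move=> H; rewrite /phi; have -> : (m.*2.+1 == n) = false by apply/negbTE; lia.
have -> : (m.*2.+1)./2 = m by lia.
by rewrite /= odd_double.
Qed.

Lemma Fv_step m : (m < L)%N -> Fv m.+1 + phi m.*2.+1 + 2 * phi m.*2 = 4 * Fv m.
Proof.
move=> H; rewrite phi2 // phi21 // /Fv.
case: (ltnP m M0) => Hm.
- have -> : maxn m.+1 M0 = M0 by apply/maxn_idPr.
  ring.
- have -> : maxn m.+1 M0 = m.+1 by apply/maxn_idPl; lia.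
  have -> : (L - m = (L - m.+1) + 1)%N by lia.
  rewrite natrD; ring.
Qed.

Definition e2 (m : nat) (c1 c2 : bool) : B :=
  [ffun i : 'I_n => ((val i == m.*2) && c1) || ((val i == m.*2.+1) && c2)].

Lemma bit_e2 m c1 c2 i : (m < L)%N ->
  bit (e2 m c1 c2) i = ((i == m.*2) && c1) || ((i == m.*2.+1) && c2).
Proof.
move=> Hm; case: (ltnP i n) => Hi.
  by rewrite -[i]/(val (Ordinal Hi)) bitO ffunE.
rewrite bit_out //; have -> : (i == m.*2) = false by apply/negbTE; lia.
by have -> : (i == m.*2.+1) = false by apply/negbTE; lia.
Qed.

Definition set11 (m : nat) (y : B) : B :=
  [ffun i : 'I_n => if (val i == m.*2) || (val i == m.*2.+1) then true else y i].

Lemma bit_set11 m y i : (m < L)%N ->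
  bit (set11 m y) i = if (i == m.*2) || (i == m.*2.+1) then true else bit y i.
Proof.
move=> Hm; case: (ltnP i n) => Hi.
  by rewrite -[i]/(val (Ordinal Hi)) !bitO ffunE.
rewrite !bit_out //; have -> : (i == m.*2) = false by apply/negbTE; lia.
by have -> : (i == m.*2.+1) = false by apply/negbTE; lia.
Qed.

Lemma sum_xor_inv (F : B -> R) (c : B) : \sum_z F z = \sum_z F (bxor z c).
Proof. by apply: reindex_inj; apply: (can_inj (g := fun z => bxor z c)) => z; rewrite bxorK. Qed.

Lemma g_block (y : B) m : (m < L)%N -> (forall l, (l < m)%N -> blk11 y l) -> ~~ blk11 y m ->
  g y = if blk00 y m then phi m.*2.+1 else phi m.*2.
Proof.
move=> Hm Hl H.
have Hc : cb y = m by apply: cb_uniq => //; lia.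
by rewrite /g DLBE Hc Hm; case: ifP.
Qed.

Lemma fresh k : forall m (y : B), (L - m)%N = k -> (m <= L)%N ->
  (forall l, (l < m)%N -> blk11 y l) ->
  \sum_z g (bxor y (msk m.*2 z)) <= #|{: B}|%:R * Fv m.
Proof.
elim: k => [|k IH] m y Hk HmL Hy.
- have Em : m = L by lia.
  subst m.
  have Hc : cb y = L by apply: cb_uniq => //; rewrite ltnn.
  have Hg : forall z, g (bxor y (msk L.*2 z)) = 0.
    move=> z; rewrite msk_out // bxor0 /g /phi.
    by have -> : DLB y == n by rewrite DLB_n Hc.
  rewrite (eq_bigr _ (fun z _ => Hg z)) big1 // /Fv.
  have -> : maxn L M0 = L by apply/maxn_idPl; exact: M0_le.
  by rewrite subnn oppr0 mulr0.
- have Hm : (m < L)%N by lia.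
  set a := m.*2.
  set G := fun z => g (bxor y (msk a z)).
  set y2 := set11 m y.
  set Q := fun u1 u2 : bool => if u1 && u2 then 0 else if ~~ u1 && ~~ u2 then phi a.+1 else phi a.
  have HG : forall z c1 c2, G (bxor z (e2 m c1 c2)) =
      Q (bit y a (+) bit z a (+) c1) (bit y a.+1 (+) bit z a.+1 (+) c2)
      + (if (bit y a (+) bit z a (+) c1) && (bit y a.+1 (+) bit z a.+1 (+) c2)
         then g (bxor y2 (msk m.+1.*2 z)) else 0).
    move=> z c1 c2; rewrite /G /Q.
    set s := bxor y (msk a (bxor z (e2 m c1 c2))).
    have Hb : forall i, bit s i = bit y i (+) ((a <= i)%N && (bit z i (+)
          (((i == m.*2) && c1) || ((i == m.*2.+1) && c2)))).
      by move=> i; rewrite /s bit_xor bit_msk bit_xor bit_e2.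
    have Hsl : forall l, (l < m)%N -> blk11 s l.
      move=> l Hl; rewrite /blk11 !Hb.
      have -> : (a <= l.*2)%N = false by apply/negbTE; rewrite /a; lia.
      have -> : (a <= l.*2.+1)%N = false by apply/negbTE; rewrite /a; lia.
      by rewrite !addbF; exact: Hy.
    have Ha : bit s a = bit y a (+) bit z a (+) c1.
      rewrite Hb leqnn /= /a eqxx /=.
      have -> : (m.*2 == m.*2.+1) = false by apply/negbTE; lia.
      by rewrite andFb orbF addbA.
    have Ha1 : bit s a.+1 = bit y a.+1 (+) bit z a.+1 (+) c2.
      rewrite Hb /a leqnSn /=; have -> : (m.*2.+1 == m.*2) = false by apply/negbTE; lia.
      by rewrite eqxx /= addbA.
    case: ifP => H11.
    + rewrite add0r.
      have -> : s = bxor y2 (msk m.+1.*2 z); last by [].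
      apply: bitP => i Hi; rewrite bit_xor bit_msk bit_set11 //.
      case/andP: H11; rewrite -Ha -Ha1 => H1 H2.
      case: (ltnP i a) => Hia.
      * rewrite Hb; have -> : (a <= i)%N = false by apply/negbTE; lia.
        have -> : (i == m.*2) = false by apply/negbTE; rewrite /a in Hia; lia.
        have -> : (i == m.*2.+1) = false by apply/negbTE; rewrite /a in Hia; lia.
        have -> : (m.+1.*2 <= i)%N = false by apply/negbTE; rewrite /a in Hia; lia.
        by rewrite /= !addbF.
      * case: (ltnP i m.+1.*2) => Hi2.
        -- have [->|->] : i = a \/ i = a.+1 by rewrite /a in Hia *; lia.
           ++ by rewrite H1 /a eqxx.
           ++ by rewrite H2 /a eqxx orbT.
        -- rewrite Hb Hia.
           have -> : (i == m.*2) = false by apply/negbTE; lia.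
           have -> : (i == m.*2.+1) = false by apply/negbTE; lia.
           by rewrite /= addbF.
    + rewrite addr0 (g_block (m := m)) //; last by rewrite /blk11 -/a Ha Ha1 H11.
      by rewrite /blk00 -/a Ha Ha1.
  have H4 : 4 * \sum_z G z = \sum_z (G (bxor z (e2 m true true)) + G (bxor z (e2 m true false))
      + G (bxor z (e2 m false true)) + G (bxor z (e2 m false false))).
    rewrite !big_split /= -!sum_xor_inv; ring.
  have Hz : forall z, G (bxor z (e2 m true true)) + G (bxor z (e2 m true false))
      + G (bxor z (e2 m false true)) + G (bxor z (e2 m false false)) =
      g (bxor y2 (msk m.+1.*2 z)) + phi a.+1 + 2 * phi a.
    move=> z; rewrite !HG /Q.
    by case: (bit y a (+) bit z a); case: (bit y a.+1 (+) bit z a.+1) => /=; ring.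
  rewrite (eq_bigr _ (fun z _ => Hz z)) in H4.
  rewrite !big_split /= !sumr_const in H4.
  have IH' := IH m.+1 y2 ltac:(lia) Hm.
  have Hy2 : forall l, (l < m.+1)%N -> blk11 y2 l.
    move=> l Hl; rewrite /blk11 /y2 !bit_set11 //.
    case: (ltnP l m) => Hlm; last by (have -> : l = m by lia); rewrite !eqxx ?orbT.
    have -> : (l.*2 == m.*2) = false by apply/negbTE; lia.
    have -> : (l.*2 == m.*2.+1) = false by apply/negbTE; lia.
    have -> : (l.*2.+1 == m.*2) = false by apply/negbTE; lia.
    have -> : (l.*2.+1 == m.*2.+1) = false by apply/negbTE; lia.
    exact: Hy.
  have := IH' Hy2; rewrite -/G => IH2.
  have Hs := Fv_step Hm.
  have Hc : (0 : R) < #|{: B}|%:R by rewrite ltr0n; apply/card_gt0P; exists (b0 n).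
  rewrite -/a in Hs.
  rewrite -(mulr_natr (phi a.+1)) -(mulr_natr (2 * phi a)) in H4.
  set N := (#|{: B}|%:R : R) in H4 IH2 Hc *.
  have E : N * (4 * Fv m) = N * Fv m.+1 + phi a.+1 * N + 2 * phi a * N by rewrite -Hs; ring.
  have E2 : N * (4 * Fv m) = 4 * (N * Fv m) by ring.
  lra.
Qed.

End Potential.

Section PermBound.
Variable R : realType.
Variable L : nat.
Local Notation n := L.*2.
Local Notation B := (B n).
Variable V : B -> B -> R.
Hypothesis HV : unary_unbiased V.

Definition cond (m : nat) (w : B) : bool :=
  [&& bit w m.*2, bit w m.*2.+1 & [forall i : 'I_n, (i < m.*2)%N ==> ~~ w i]].

Lemma bperm_b0 (s : {perm 'I_n}) : bperm s (b0 n) = b0 n.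
Proof. by apply/ffunP => i; rewrite !ffunE. Qed.

Lemma sum_perm_inv (F : B -> R) (s : {perm 'I_n}) :
  \sum_w V (b0 n) w * F w = \sum_w V (b0 n) w * F (bperm s w).
Proof.
have Hinj : injective (bperm s).
  apply: (can_inj (g := bperm s^-1)) => w; apply/ffunP => i; rewrite !ffunE.
  by rewrite -permM mulVg perm1.
rewrite (reindex_inj Hinj); apply: eq_bigr => w _.
case: HV => _ _ _ H4; by rewrite (H4 (b0 n) w s) bperm_b0.
Qed.

Section Fixm.
Variable m : nat.
Hypothesis Hm : (m < L)%N.

Lemma ltn_a : (m.*2 < n)%N. Proof. lia. Qed.
Lemma ltn_b : (m.*2.+1 < n)%N. Proof. lia. Qed.
Lemma ltn_i (i : 'I_m) : (i < n)%N. Proof. have := ltn_ord i; lia. Qed.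
Lemma ltn_j (j : 'I_m) : (m + j < n)%N. Proof. have := ltn_ord j; lia. Qed.

Definition sg (i j : 'I_m) : {perm 'I_n} :=
  (tperm (Ordinal ltn_a) (Ordinal (ltn_i i)) * tperm (Ordinal ltn_b) (Ordinal (ltn_j j)))%g.

Lemma cond_perm (w : B) (i j : 'I_m) : cond m (bperm (sg i j) w) ->
  forall k, (k < m.*2)%N -> bit w k = (k == i) || (k == m + j).
Proof.
have Hi := ltn_ord i; have Hj := ltn_ord j.
move=> H k Hk; move: H; rewrite /cond /sg.
set a := Ordinal ltn_a; set b := Ordinal ltn_b.
set ai := Ordinal (ltn_i i); set bj := Ordinal (ltn_j j).
have Hab : a != b by apply/eqP => /(congr1 val) /=; lia.
have Haib : ai != b by apply/eqP => /(congr1 val) /=; lia.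
have Hbai : b != ai by apply/eqP => /(congr1 val) /=; lia.
have Hbjai : bj != ai by apply/eqP => /(congr1 val) /=; lia.
rewrite -[m.*2]/(val a) -[m.*2.+1]/(val b) !bitO !ffunE !permM.
rewrite tpermL (tpermD Hbai Hbjai) (tpermD Hab Haib) tpermL.
case/and3P => Hwai Hwbj /forallP Hall.
have Hkn : (k < n)%N by lia.
rewrite -[k]/(val (Ordinal Hkn)) bitO.
case: (eqVneq (Ordinal Hkn) ai) => [Hk1|Hk1].
  by rewrite Hk1 Hwai /= eqxx.
case: (eqVneq (Ordinal Hkn) bj) => [Hk2|Hk2].
  by rewrite Hk2 Hwbj /= eqxx orbT.
have := Hall (Ordinal Hkn); rewrite /= Hk !ffunE permM.
have Hak : a != Ordinal Hkn by apply/eqP => /(congr1 val) /=; lia.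
have Hbk : b != Ordinal Hkn by apply/eqP => /(congr1 val) /=; lia.
rewrite eq_sym in Hk1; rewrite eq_sym in Hk2.
rewrite (tpermD Hak Hk1) (tpermD Hbk Hk2).
move/negbTE => ->; symmetry; apply/negbTE.
rewrite negb_or; apply/andP; split.
- by apply/eqP => E; move: Hk1 => /eqP; apply; apply: val_inj.
- by apply/eqP => E; move: Hk2 => /eqP; apply; apply: val_inj.
Qed.

Lemma cond_uniq (w : B) (i j i' j' : 'I_m) : cond m (bperm (sg i j) w) ->
  cond m (bperm (sg i' j') w) -> i = i' /\ j = j'.
Proof.
move=> H1 H2; have Hi := ltn_ord i; have Hj := ltn_ord j.
have Hi' := ltn_ord i'; have Hj' := ltn_ord j'.
have E1 := cond_perm H1; have E2 := cond_perm H2.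
have K1 : (i < m.*2)%N by lia.
have K2 : (m + j < m.*2)%N by lia.
have := E1 _ K1; rewrite E2 // eqxx /= => /orP [/eqP Ei|/eqP Ei]; last lia.
have := E1 _ K2; rewrite E2 // eqxx orbT => /orP [/eqP Ej|/eqP Ej]; first lia.
by split; apply: val_inj => /=; lia.
Qed.

Lemma sum_cond_le1 (w : B) :
  \sum_(i < m) \sum_(j < m) (cond m (bperm (sg i j) w))%:R <= (1 : R).
Proof.
rewrite pair_bigA /=.
case: (pickP (fun p : 'I_m * 'I_m => cond m (bperm (sg p.1 p.2) w))) => [[i0 j0] H0|Hn].
- rewrite (bigD1 (i0, j0)) //= H0 big1 ?addr0 // => [[i j]] /= Hp.
  case Hc: (cond _ _) => //.
  have [E1 E2] := cond_uniq Hc H0.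
  by move: Hp; rewrite E1 E2 eqxx.
- by rewrite big1 // => p _; rewrite Hn.
Qed.

Lemma P2_bound : (\sum_w V (b0 n) w * (cond m w)%:R) * (m%:R * m%:R) <= 1.
Proof.
set P := \sum_w V (b0 n) w * (cond m w)%:R.
have E : forall (i j : 'I_m), P =
   \sum_w V (b0 n) w * (cond m (bperm (sg i j) w))%:R.
  by move=> i j; rewrite /P (sum_perm_inv (fun w => (cond m w)%:R) (sg i j)).
have E2 : \sum_(i < m) \sum_(j < m) \sum_w V (b0 n) w * (cond m (bperm (sg i j) w))%:R
   = \sum_(i < m) \sum_(j < m) P.
  by apply: eq_bigr => i _; apply: eq_bigr => j _; rewrite -E.
have E3 : \sum_(i < m) \sum_(j < m) P = P * (m%:R * m%:R).
  by rewrite !sumr_const !card_ord -mulrnA -natrM mulr_natr.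
rewrite -E3 -E2.
under eq_bigr => i _ do rewrite exchange_big /=.
rewrite exchange_big /=.
apply: (@le_trans _ _ (\sum_w V (b0 n) w)); last by case: HV => _ -> .
apply: ler_sum => w _.
have -> : \sum_(i < m) \sum_(j < m) V (b0 n) w * (cond m (bperm (sg i j) w))%:R =
  V (b0 n) w * \sum_(i < m) \sum_(j < m) (cond m (bperm (sg i j) w))%:R.
  by rewrite mulr_sumr; apply: eq_bigr => i _; rewrite mulr_sumr.
rewrite -[X in _ <= X]mulr1; apply: ler_wpM2l; first by case: HV.
exact: sum_cond_le1.
Qed.

End Fixm.
End PermBound.

Section Drift.
Variable R : realType.
Variable L : nat.
Local Notation n := L.*2.
Local Notation B := (B n).

Definition late00 (x : B) := [&& (cb x < L)%N, (M0 L <= cb x)%N & blk00 x (cb x)].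

Lemma blk_agree (x y : B) l k : (l.*2.+2 <= k)%N -> (forall i, (i < k)%N -> bit x i = bit y i) ->
  blk11 x l = blk11 y l /\ blk00 x l = blk00 y l.
Proof. by move=> Hk H; rewrite /blk11 /blk00 !H //; lia. Qed.

Lemma gE (x : B) : g R x = phi R L (DLB x).
Proof. by []. Qed.

Lemma gx_form (x : B) : (cb x < L)%N ->
  g R x = if blk00 x (cb x) then phi R L (cb x).*2.+1 else phi R L (cb x).*2.
Proof. by move=> H; rewrite gE DLBE H; case: ifP. Qed.

Lemma perw0 (x w : B) :
  \sum_z phi R L (maxn (DLB x) (DLB (bxor (bxor x (msk (cb x).*2.+2 z)) w)))
  <= #|{: B}|%:R * (g R x + 4 * (late00 x && cond (cb x) w)%:R).
Proof.
set m := cb x.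
set N := (#|{: B}|%:R : R).
have HN : 0 <= N by rewrite ler0n.
have Hagree : forall z i, (i < m.*2.+2)%N ->
    bit (bxor (bxor x (msk m.*2.+2 z)) w) i = bit (bxor x w) i.
  move=> z i Hi; rewrite !bit_xor bit_msk (_ : (m.*2.+2 <= i)%N = false) ?addbF //.
  by apply/negbTE; rewrite -ltnNge.
have Hind : (0 : R) <= (late00 x && cond m w)%:R by rewrite ler0n.
case: (boolP ((m < L)%N && [forall l : 'I_m.+1, blk11 (bxor x w) l])) => Hc.
- case/andP: Hc => HmL /forallP Hall.
  have Hall' : forall l, (l < m.+1)%N -> blk11 (bxor x w) l.
    by move=> l Hl; exact: (Hall (Ordinal Hl)).
  have Hq : forall z, bxor (bxor x (msk m.*2.+2 z)) w = bxor (bxor x w) (msk m.+1.*2 z).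
    by move=> z; rewrite -!bxorA (bxorC (msk _ z)).
  have HD : forall z, maxn (DLB x) (DLB (bxor (bxor x (msk m.*2.+2 z)) w)) =
      DLB (bxor (bxor x w) (msk m.+1.*2 z)).
    move=> z; rewrite Hq; apply/maxn_idPr; apply: ltnW.
    set q := bxor (bxor x w) (msk m.+1.*2 z).
    have Hcq : (m.+1 <= cb q)%N.
      rewrite ltnNge; apply/negP => Hle.
      have HqL : (cb q < L)%N by lia.
      have Hagq : forall i, (i < m.*2.+2)%N -> bit q i = bit (bxor x w) i.
        by move=> i Hi; rewrite /q -Hq Hagree.
      have [E _] := blk_agree (l := cb q) (ltac:(lia) : ((cb q).*2.+2 <= m.*2.+2)%N) Hagq.
      by have := cb_at HqL; rewrite E Hall' //; lia.
    have := DLB_lt HmL; have := DLB_ge q; rewrite -/m; lia.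
  under eq_bigr => z _ do rewrite HD.
  apply: le_trans (@fresh R L (L - m.+1)%N m.+1 (bxor x w) erefl HmL Hall') _.
  apply: ler_wpM2l => //.
  rewrite /Fv gx_form // -/m.
  case: (ltnP m (M0 L)) => HM.
  + have -> : maxn m.+1 (M0 L) = M0 L by apply/maxn_idPr.
    rewrite phi21 // phi2 // HM; case: ifP => _; lra.
  + have -> : maxn m.+1 (M0 L) = m.+1 by apply/maxn_idPl; lia.
    rewrite phi21 // phi2 //; have -> : (m < M0 L)%N = false by lia.
    case: ifP => H00.
    * have -> : late00 x && cond m w.
        rewrite /late00 -/m HmL HM H00 /= /cond.
        have := Hall' _ (ltnSn m); rewrite /blk11 !bit_xor.
        move: H00; rewrite /blk00 => /andP [/negbTE -> /negbTE ->] /= /andP [-> ->] /=.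
        apply/forallP => i; apply/implyP => Hi.
        have Hl : ((i./2) < m)%N by lia.
        have := cb_before Hl; have := Hall' _ (ltnW Hl).
        rewrite /blk11 !bit_xor -bitO.
        have E0 := odd_double_half i.
        have [E|E] : (i : nat) = (i./2).*2 \/ (i : nat) = (i./2).*2.+1.
          by case: (odd i) E0 => /= E0; [right|left]; rewrite -{1}E0 ?add1n ?add0n.
        -- by rewrite -E => /andP [H1 _] /andP [H2 _]; move: H1; rewrite H2.
        -- by rewrite -E => /andP [_ H1] /andP [_ H2]; move: H1; rewrite H2.
      rewrite /=; lra.
    * lra.
- have Hp : forall z, phi R L (maxn (DLB x) (DLB (bxor (bxor x (msk m.*2.+2 z)) w))) <= g R x.
    move=> z; set q := bxor (bxor x (msk m.*2.+2 z)) w.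
    case: (leqP (DLB q) (DLB x)) => Hq.
      by rewrite gE.
    have HmL : (m < L)%N.
      rewrite ltn_neqAle cb_le andbT; apply/negP => /eqP E.
      have : DLB x == n by rewrite DLB_n -/m E.
      by move/eqP => E2; have := DLB_le q; lia.
    move: Hc; rewrite HmL /= => /forallPn [l Hl].
    have Hl' := ltn_ord l.
    have Hcq : (cb q <= l)%N.
      rewrite leqNgt; apply/negP => Hlt.
      have Hagq : forall i, (i < m.*2.+2)%N -> bit q i = bit (bxor x w) i.
        by move=> i Hi; rewrite /q Hagree.
      have [E _] := blk_agree (l := l) (ltac:(lia) : (l.*2.+2 <= m.*2.+2)%N) Hagq.
      by have := cb_before Hlt; rewrite E (negbTE Hl).
    have HqL : (cb q < L)%N by lia.
    have Hcq2 : cb q = m.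
      apply/eqP; rewrite eqn_leq; apply/andP; split; first lia.
      rewrite leqNgt; apply/negP => Hlt.
      have := DLB_lt HqL; have := DLB_ge x; rewrite -/m; lia.
    rewrite gx_form // -/m.
    move: Hq; rewrite (DLBE q) HqL Hcq2 DLBE -/m HmL.
    case: (blk00 q m); case: (blk00 x m) => Hq //; try lia.
    rewrite phi21 // phi2 //; case: ifP => _; lra.
  apply: le_trans (ler_sum _ (fun z _ => Hp z)) _.
  rewrite sumr_const.
  rewrite -(mulr_natr (g R x)) mulrC.
  apply: ler_wpM2l; [exact: HN | lra].
Qed.

End Drift.

Section Main.
Variable R : realType.
Variable L : nat.
Local Notation n := L.*2.
Local Notation B := (B n).
Variable A : ealg R n.

Definition Psi (h : seq nat) (y : B) : R :=
  \sum_q op A h y q * g R (select A (rcons h (DLB q)) y q).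

Lemma bxorKl (y w : B) : bxor y (bxor y w) = w.
Proof. by rewrite bxorA bxorxx bxorC bxor0. Qed.

Lemma PsiE h y : Psi h y = \sum_w op A h (b0 n) w * phi R L (maxn (DLB y) (DLB (bxor y w))).
Proof.
rewrite /Psi (reindex_inj (can_inj (g := bxor y) (bxorKl y))).
apply: eq_bigr => w _.
rewrite gE sel_DLB -(op_xor A h (b0 n) w y) (bxorC (b0 n) y) bxor0 (bxorC w y).
done.
Qed.

Lemma DLB_ymsk (x : B) z : DLB (bxor x (msk (cb x).*2.+2 z)) = DLB x.
Proof.
apply: (cb_congr _).2 => i Hi; rewrite bit_xor bit_msk.
by rewrite (_ : ((cb x).*2.+2 <= i)%N = false) ?addbF //; apply/negbTE; rewrite -ltnNge.
Qed.

Definition delta : R := 4 / ((M0 L)%:R * (M0 L)%:R).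

Lemma driftA h (x : B) : (0 < M0 L)%N ->
  \sum_z Psi h (bxor x (msk (cb x).*2.+2 z)) <= #|{: B}|%:R * (g R x + delta).
Proof.
move=> HM.
set N := (#|{: B}|%:R : R).
have HN : 0 <= N by rewrite ler0n.
under eq_bigr => z _ do rewrite PsiE DLB_ymsk.
rewrite exchange_big /=.
under eq_bigr => w _ do rewrite -mulr_sumr.
apply: le_trans (ler_sum _ (fun w _ => ler_wpM2l (op_ge0 A h (b0 n) w) (@perw0 R L x w))) _.
pose c := fun w : B => ((late00 x && cond (cb x) w)%:R : R).
change (\sum_w op A h (b0 n) w * (N * (g R x + 4 * (late00 x && cond (cb x) w)%:R)) <= N * (g R x + delta)).
have E : \sum_w op A h (b0 n) w * (N * (g R x + 4 * c w)) =
  N * g R x * (\sum_w op A h (b0 n) w) + 4 * N * (\sum_w op A h (b0 n) w * c w).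
  rewrite (eq_bigr (fun w => N * g R x * op A h (b0 n) w + 4 * N * (op A h (b0 n) w * c w))).
    by rewrite big_split /= -!mulr_sumr.
  by move=> w _; ring.
rewrite E op_sum1.
set X := ((M0 L)%:R * (M0 L)%:R : R).
have HX : 0 < X by rewrite mulr_gt0 // ltr0n.
have HP : \sum_w op A h (b0 n) w * c w <= X^-1.
  case: (boolP (late00 x)) => Hl.
  - rewrite /c Hl /=.
    case/and3P: Hl => HcL HMc _.
    have HP2 := P2_bound (op_unbiased A h) HcL.
    set P := \sum_w _ in HP2 *.
    have HP0 : 0 <= P by apply: sumr_ge0 => w _; rewrite mulr_ge0 ?op_ge0 ?ler0n.
    rewrite -div1r ler_pdivlMr //.
    apply: le_trans HP2; apply: ler_wpM2l => //.
    by rewrite /X -!natrM ler_nat leq_mul.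
  - rewrite big1; first by rewrite invr_ge0 ltW.
    by move=> w _; rewrite /c (negbTE Hl) /= mulr0.
have HNP : N * (\sum_w op A h (b0 n) w * c w) <= N * X^-1 by apply: ler_wpM2l.
have -> : delta = 4 * X^-1 by [].
lra.
Qed.

End Main.

Section Tuples.
Variable T : finType.
Variable R : realType.

Lemma sum_rcons k (F : k.+1.-tuple T -> R) :
  \sum_(t : k.+1.-tuple T) F t = \sum_(t : k.-tuple T) \sum_(q : T) F [tuple of rcons t q].
Proof.
rewrite pair_bigA /=.
pose h := fun p : k.-tuple T * T => [tuple of rcons p.1 p.2].
pose hi := fun t : k.+1.-tuple T =>
  ([tuple of belast (thead t) (behead t)], last (thead t) (behead t)).
rewrite (reindex h) /=; first by [].
exists hi => [[s q] _|t _].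
- rewrite /hi /h /=; apply/eqP; rewrite xpair_eqE; apply/andP.
  have Ht : thead [tuple of rcons s q] :: behead [tuple of rcons s q] = rcons s q.
    exact: (esym (congr1 val (tuple_eta [tuple of rcons s q]))).
  have := lastI (thead [tuple of rcons s q]) (behead [tuple of rcons s q]).
  rewrite Ht => /rcons_inj H; have E1 := congr1 fst H; have E2 := congr1 snd H.
  simpl in E1, E2; split; last by rewrite [in X in _ == X]E2.
  by apply/eqP; apply: val_inj; rewrite /= [in RHS]E1.
- apply: val_inj; rewrite /h /hi /= -lastI.
  exact: (esym (congr1 val (tuple_eta t))).
Qed.

Lemma sum_tuple0 (F : 0.-tuple T -> R) : \sum_(t : 0.-tuple T) F t = F [tuple].
Proof.
rewrite (eq_bigr (fun _ => F [tuple])); last by move=> t _; rewrite tuple0.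
by rewrite sumr_const card_tuple expn0.
Qed.

End Tuples.

Section Chain.
Variable R : realType.
Variable L : nat.
Local Notation n := L.*2.
Local Notation B := (B n).
Variable A : ealg R n.

Definition Tk k := \sum_(t : k.+1.-tuple B) traj_prob A t.
Definition Sk k := \sum_(t : k.+1.-tuple B) traj_prob A t * g R (st A t).2.

Lemma tuple_nonnil k (t : k.+1.-tuple B) : (t : seq B) != [::].
Proof. by case: t => [[|q qs]]. Qed.

Lemma cardB_gt0 : (0 : R) < #|{: B}|%:R.
Proof. by rewrite ltr0n; apply/card_gt0P; exists (b0 n). Qed.

Lemma Tk1 k : Tk k = 1.
Proof.
elim: k => [|k IH].
- rewrite /Tk sum_rcons sum_tuple0 /=.
  under eq_bigr => q _ do rewrite mulr1.
  rewrite sumr_const -(mulr_natr (#|{: B}|%:R^-1)) mulVf //.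
  by apply/lt0r_neq0; exact: cardB_gt0.
- rewrite /Tk sum_rcons -[RHS]IH /Tk; apply: eq_bigr => t _.
  under eq_bigr => q _ do rewrite /= (traj_rcons _ _ (tuple_nonnil t)).
  by rewrite -mulr_sumr op_sum1 mulr1.
Qed.

Lemma S0 : Sk 0 <= Fv R L 0.
Proof.
rewrite /Sk sum_rcons sum_tuple0 /=.
under eq_bigr => q _ do rewrite mulr1.
rewrite -mulr_sumr.
have H := @fresh R L L 0 (b0 n) (subn0 L) (leq0n L) (fun l (Hl : (l < 0)%N) => False_ind _ (notF Hl)).
have Hz : forall z : B, g R (bxor (b0 n) (msk 0.*2 z)) = g R z.
  by move=> z; rewrite [0.*2]/= msk0 bxorC bxor0.
rewrite (eq_bigr _ (fun z _ => Hz z)) in H.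
have Hc := cardB_gt0.
rewrite -(ler_pM2l Hc) mulrA mulfV ?mul1r //; last by apply/lt0r_neq0.
Qed.

Lemma DLB_xor_le (x y : B) z : (DLB y <= DLB x)%N ->
  DLB (bxor y (msk (cb x).*2.+2 z)) = DLB y.
Proof.
move=> Hyx; case: (ltnP (cb x) L) => HL.
- have Hcy : (cb y <= cb x)%N.
    rewrite leqNgt; apply/negP => H; have := DLB_ge y; have := DLB_lt HL; lia.
  apply: (cb_congr (x := y) _).2 => i Hi; rewrite bit_xor bit_msk.
  by rewrite (_ : ((cb x).*2.+2 <= i)%N = false) ?addbF //; apply/negbTE; rewrite -ltnNge; lia.
- by rewrite msk_out ?bxor0 //; have := cb_le x; lia.
Qed.

Lemma tau_props (t : seq B) z : t != [::] ->
  let r := msk (cb (st A t).2).*2.+2 z in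
  [/\ st A (map (fun y => bxor y r) t) = ((st A t).1, bxor (st A t).2 r),
      traj_prob A (map (fun y => bxor y r) t) = traj_prob A t &
      cb (bxor (st A t).2 r) = cb (st A t).2].
Proof.
case: t => [|q0 qs] //= _.
set x := (run A [:: DLB q0] q0 qs).2.
have Hp : forall y, y \in q0 :: qs -> DLB (bxor y (msk (cb x).*2.+2 z)) = DLB y.
  by move=> y Hy; apply: DLB_xor_le; apply: run_max.
split.
- by rewrite Hp ?mem_head // run_xor.
- by rewrite Hp ?mem_head // steps_xor.
- apply: (cb_congr _).1 => i Hi; rewrite bit_xor bit_msk.
  by rewrite (_ : ((cb x).*2.+2 <= i)%N = false) ?addbF //; apply/negbTE; rewrite -ltnNge.
Qed.

Definition tau k z (t : k.+1.-tuple B) : k.+1.-tuple B :=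
  [tuple of map (fun y => bxor y (msk (cb (st A t).2).*2.+2 z)) t].
Arguments tau : clear implicits.

Lemma tauK k z : involutive (tau k z).
Proof.
move=> t; apply: val_inj => /=.
have [E1 _ E3] := tau_props z (tuple_nonnil t).
rewrite E1 /= E3 -map_comp.
rewrite -[RHS]map_id; apply: eq_map => y /=; exact: bxorK.
Qed.

Lemma Sstep k : (0 < M0 L)%N -> Sk k.+1 <= Sk k + delta R L.
Proof.
move=> HM.
have E1 : Sk k.+1 = \sum_(t : k.+1.-tuple B) traj_prob A t * Psi A (st A t).1 (st A t).2.
  rewrite /Sk sum_rcons; apply: eq_bigr => t _; rewrite /Psi mulr_sumr; apply: eq_bigr => q _.
  by rewrite /= (traj_rcons _ _ (tuple_nonnil t)) (st_rcons _ _ (tuple_nonnil t)) /= mulrA.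
have E2 : forall z, \sum_(t : k.+1.-tuple B) traj_prob A t * Psi A (st A t).1 (st A t).2 =
   \sum_(t : k.+1.-tuple B) traj_prob A t *
      Psi A (st A t).1 (bxor (st A t).2 (msk (cb (st A t).2).*2.+2 z)).
  move=> z; rewrite (reindex_inj (inv_inj (@tauK k z))); apply: eq_bigr => t _.
  have [E1' E2' _] := tau_props z (tuple_nonnil t).
  by rewrite /tau /= E1' E2'.
set LHS := \sum_(t : k.+1.-tuple B) _ in E1 E2.
set N := (#|{: B}|%:R : R).
have HN := cardB_gt0.
have E3 : N * LHS = \sum_z \sum_(t : k.+1.-tuple B) traj_prob A t *
      Psi A (st A t).1 (bxor (st A t).2 (msk (cb (st A t).2).*2.+2 z)).
  rewrite (eq_bigr (fun _ => LHS)); last by move=> z _; rewrite (E2 z).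
  by rewrite sumr_const -mulr_natl.
have E4 : N * LHS <= N * (Sk k + delta R L).
  rewrite E3 exchange_big /=.
  apply: (@le_trans _ _ (\sum_(t : k.+1.-tuple B) traj_prob A t * (N * (g R (st A t).2 + delta R L)))).
    apply: ler_sum => t _; rewrite -mulr_sumr; apply: ler_wpM2l; first exact: traj_ge0.
    exact: driftA.
  have -> : \sum_(t : k.+1.-tuple B) traj_prob A t * (N * (g R (st A t).2 + delta R L)) =
     N * (Sk k + delta R L * Tk k).
    rewrite /Sk /Tk mulr_sumr -big_split /= mulr_sumr; apply: eq_bigr => t _; ring.
  by rewrite Tk1 mulr1.
rewrite E1; by rewrite ler_pM2l in E4.
Qed.

Lemma Sk_bound k : (0 < M0 L)%N -> Sk k <= Fv R L 0 + k%:R * delta R L.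
Proof.
move=> HM; elim: k => [|k IH]; first by rewrite mul0r addr0; exact: S0.
apply: le_trans (Sstep k HM) _; rewrite -natr1 mulrDl mul1r addrA lerD2r //.
Qed.

Lemma phi_ge D : - ((L - M0 L)%:R + 4) <= phi R L D.
Proof.
rewrite /phi; case: ifP => _; first by rewrite oppr_le0 addr_ge0 ?ler0n.
case: ifP => H; first by rewrite lerN2 lerDl.
have Hle : ((L - (D./2).+1) <= L - M0 L)%N by apply: leq_sub2l; lia.
have Hle' : ((L - (D./2).+1)%:R <= (L - M0 L)%:R :> R) by rewrite ler_nat.
case: ifP => _; lra.
Qed.

Lemma Sk_lower k : - ((L - M0 L)%:R + 4) * surv A k.+1 <= Sk k.
Proof.
rewrite /surv /Sk mulr_sumr; apply: ler_sum => t _.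
case: ifP => Hall.
- rewrite mulrC; apply: ler_wpM2l; first exact: traj_ge0.
  exact: phi_ge.
- rewrite mulr0.
  have [y Hy Hopt] : exists2 y, y \in (t : seq B) & optimal y.
    by move/negbT: Hall => /allPn [y Hy /negPn Ho]; exists y.
  have Hx : DLB (st A t).2 = n.
    move: Hy; case: (t : seq B) (tuple_nonnil t) => [|q0 qs] //= _ Hy.
    apply/eqP; rewrite eqn_leq DLB_le /=.
    rewrite optimalE in Hopt.
    by move: (run_max A [:: DLB q0] Hy); rewrite (eqP Hopt).
  by rewrite gE Hx /phi eqxx mulr0.
Qed.

End Chain.

Section Final.
Variable R : realType.
Variable L : nat.
Local Notation n := L.*2.
Local Notation B := (B n).
Variable A : ealg R n.

Lemma surv_ge0 k : 0 <= surv A k.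
Proof. by apply: sumr_ge0 => t _; case: ifP => _ //; exact: traj_ge0. Qed.

Lemma surv_quarter j : (4 <= L - M0 L)%N -> (0 < M0 L)%N ->
  (8 * j <= (L - M0 L) * (M0 L * M0 L))%N -> 1 / 4 <= surv A j.+1.
Proof.
move=> H4 HM Hj.
have H1 := Sk_lower A j; have H2 := Sk_bound A j HM.
have HF : Fv R L 0 = - (L - M0 L)%:R by rewrite /Fv max0n.
set A0 := ((L - M0 L)%:R : R) in H1 H2 HF *.
set s := surv A j.+1 in H1 *.
set X := ((M0 L)%:R * (M0 L)%:R : R).
have HX : 0 < X by rewrite mulr_gt0 // ltr0n.
have HA4 : 4 <= A0 by rewrite /A0 (ler_nat R 4).
have Hd : j%:R * delta R L <= A0 / 2.
  rewrite /delta -/X mulrA ler_pdivrMr // mulrAC ler_pdivlMr //.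
  have : ((8 * j)%:R <= ((L - M0 L) * (M0 L * M0 L))%:R :> R) by rewrite ler_nat.
  by rewrite !natrM -/A0 -/X => H; lra.
have Hs : (A0 + 4) * (1 / 4) <= (A0 + 4) * s by lra.
by rewrite ler_pM2l in Hs; lra.
Qed.

End Final.

Unset Implicit Arguments.

Theorem theorem9 (R : realType) :
  exists c : R, 0 < c /\
  exists N : nat, forall n : nat, ~~ odd n -> (N <= n)%N ->
    ((c * n%:R ^+ 3)%:E <= dlb_complexity R n)%E.
Proof.
exists (1 / 8192); split; first by apply: divr_gt0; [exact: ltr01 | rewrite ltr0n].
exists 64%N => n Hodd Hn.
have [L EL] : exists L, n = L.*2.
  by exists n./2; have := odd_double_half n; rewrite (negbTE Hodd) add0n.
subst n.
set M := M0 L.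
set A0 := (L - M)%N.
set K := ((A0 * (M * M)) %/ 8)%N.
have HM : (0 < M)%N by rewrite /M /M0; lia.
have H4 : (4 <= A0)%N by rewrite /A0 /M /M0; lia.
apply/ereal_infP => _ [A _ <-].
rewrite /expected_runtime.
apply: le_trans (nneseries_lim_ge K.+2 _); last by move=> k _ _; rewrite lee_fin surv_ge0.
rewrite sumEFin lee_fin big_nat_recl //.
have Hsum : ((K.+1)%:R / 4 : R) <= \sum_(0 <= i < K.+1) surv A i.+1.
  have Hq : \sum_(0 <= i < K.+1) (1 / 4 : R) <= \sum_(0 <= i < K.+1) surv A i.+1.
    apply: ler_sum_nat => i /andP [_ Hi]; apply: surv_quarter => //.
    have : (8 * K <= A0 * (M * M))%N by rewrite /K mulnC leq_trunc_div.
    lia.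
  have Hc : \sum_(0 <= i < K.+1) (1 / 4 : R) = (K.+1)%:R / 4.
    by rewrite sumr_const_nat subn0 mulrnAl.
  by rewrite -Hc.
have H0 := surv_ge0 A 0.
have HK : (L * L * L <= 256 * K.+1)%N.
  have HK1 : (A0 * (M * M) < 8 * K.+1)%N.
    by rewrite /K [(8 * _)%N]mulnC ltn_ceil.
  have HL : (L * L * L <= (2 * A0) * (4 * M) * (4 * M))%N.
    by rewrite !leq_mul //; rewrite /A0 /M /M0; lia.
  lia.
have HKR : (L%:R ^+ 3 <= 256 * (K.+1)%:R :> R).
  by rewrite -natrX -(natrM R 256) ler_nat expnS expnS expn1 mulnA.
have -> : ((L.*2)%:R ^+ 3 : R) = 8 * L%:R ^+ 3.
  by rewrite -muln2 natrM exprMn; ring.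
lra.
Qed.
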